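(* Let $G,H$ be profinite groups and $\varphi:G\to H$ an abstract group isomorphism (not assumed continuous). If $P$ is a $p$-Sylow subgroup of $G$ for a prime $p$, then $\varphi(P)$ is a $p$-Sylow subgroup of $H$.
   Context: A $p$-Sylow subgroup of a profinite group is a maximal closed pro-$p$ subgroup. *)

(* Defs.v *)
From HB Require Import structures.
From mathcomp Require Import all_boot monoid.
From mathcomp Require Import boolp classical_sets topology.

Set Implicit Arguments.
Unset Strict Implicit.
Unset Printing Implicit Defensive.

Local Open Scope classical_set_scope.
Local Open Scope group_scope.

(* A carrier that is both an (abstract, possibly infinite) group and a
   topological space; no compatibility is required here (see below). *)
HB.structure Definition TopGroup := {G of Group G & Topological G}.
Notation topGroupType := TopGroup.type.

Definition topological_group (G : topGroupType) : Prop :=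
  continuous (fun xy : G * G => xy.1 * xy.2) /\ continuous (fun x : G => x^-1).

Definition profinite (G : topGroupType) : Prop :=
  [/\ topological_group G, hausdorff_space G, compact [set: G]
    & totally_disconnected [set: G]].

Definition is_subgroup (G : topGroupType) (H : set G) : Prop :=
  [/\ H 1, (forall x y, H x -> H y -> H (x * y)) & (forall x, H x -> H x^-1)].

Definition rel_open (G : topGroupType) (P N : set G) : Prop :=
  exists U : set G, open U /\ N = P `&` U.

Definition normal_in (G : topGroupType) (N P : set G) : Prop :=
  forall x n, P x -> N n -> N (x^-1 * n * x).

(* The index [P : N] equals k: there are k elements of P, pairwise in
   distinct left cosets of N, whose left N-cosets cover P. *)
Definition index_eq (G : topGroupType) (P N : set G) (k : nat) : Prop :=
  exists s : seq G,
  [/\ size s = k,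
      (forall i, (i < k)%N -> P (nth 1 s i)),
      (forall x, P x -> exists2 i, (i < k)%N & N ((nth 1 s i)^-1 * x))
    & (forall i j, (i < k)%N -> (j < k)%N ->
                   N ((nth 1 s i)^-1 * nth 1 s j) -> i = j)].

(* P is a closed pro-p subgroup of G: a closed subgroup (hence profinite in
   the subspace topology when G is) all of whose quotients by open normal
   subgroups are finite p-groups, i.e. have index a power of p. *)
Definition pro_p_subgroup (p : nat) (G : topGroupType) (P : set G) : Prop :=
  [/\ is_subgroup P, closed P &
      forall N : set G, is_subgroup N -> N `<=` P -> normal_in N P ->
        rel_open P N -> exists k : nat, index_eq P N (p ^ k)].

Definition p_Sylow (p : nat) (G : topGroupType) (P : set G) : Prop :=
  pro_p_subgroup p P /\
  forall Q : set G, pro_p_subgroup p Q -> P `<=` Q -> Q = P.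

(* Main.v *)
Require Import Defs.
From HB Require Import structures.
From mathcomp Require Import all_boot monoid.
From mathcomp Require Import boolp classical_sets topology.
From mathcomp Require Import finmap.
From mathcomp Require Import fingroup perm cyclic pgroup.
Require Import Defs.
Set Implicit Arguments.
Unset Strict Implicit.
Unset Printing Implicit Defensive.
Local Open Scope classical_set_scope.
Local Open Scope group_scope.

Definition ptG (G : topGroupType) : Type := G.
HB.instance Definition _ (G : topGroupType) := TopGroup.on (ptG G).
HB.instance Definition _ (G : topGroupType) := isPointed.Build (ptG G) 1.

Lemma openP (T : topologicalType) (A : set T) : open A <-> (forall x, A x -> nbhs x A).
Proof. by rewrite openE. Qed.

Section TG.
Variable G : topGroupType.
Hypothesis tg : topological_group G.

Lemma mul_nbhs (x y : G) W : nbhs (x * y) W ->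
  exists A, exists B, [/\ nbhs x A, nbhs y B & forall a b, A a -> B b -> W (a * b)].
Proof.
move=> hW; have [[A B] /= [hA hB] sub] := tg.1 (x, y) W hW.
by exists A, B; split=> // a b Aa Bb; exact: (sub (a, b)).
Qed.

Lemma inv_nbhs (x : G) W : nbhs (x^-1) W -> nbhs x [set a | W a^-1].
Proof. by move=> hW; exact: (tg.2 x W hW). Qed.

Lemma lmul_nbhs (a y : G) W : nbhs (a * y) W -> nbhs y [set b | W (a * b)].
Proof.
move=> /mul_nbhs [A [B [hA hB sub]]]; apply: filterS hB => b Bb.
exact: sub (nbhs_singleton hA) Bb.
Qed.

Lemma rmul_nbhs (a y : G) W : nbhs (y * a) W -> nbhs y [set b | W (b * a)].
Proof.
move=> /mul_nbhs [A [B [hA hB sub]]]; apply: filterS hA => b Ab.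
exact: sub Ab (nbhs_singleton hB).
Qed.

Lemma open_lmul (a : G) U : open U -> open [set b | U (a * b)].
Proof. by move/openP=> oU; apply/openP=> y Uy; apply: lmul_nbhs; exact: oU. Qed.

Lemma open_inv U : open U -> open [set b : G | U b^-1].
Proof. by move/openP=> oU; apply/openP=> y Uy; apply: inv_nbhs; exact: oU. Qed.

End TG.

Lemma cover_seq (G : topGroupType) (A : set G) (I : choiceType) (D : set I) (f : I -> set G) :
  compact A -> (forall i, D i -> open (f i)) -> A `<=` \bigcup_(i in D) f i ->
  exists s : seq I, (forall i, i \in s -> D i) /\ A `<=` \bigcup_(i in [set` s]) f i.
Proof.
move=> cA oF Acov.
have : @compact (ptG G) A by exact: cA.
rewrite compact_cover => /(_ I D f oF Acov) [D' sD' cov].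
exists (enum_fset D'); split.
  by move=> i iD; apply: set_mem; exact: sD'.
move=> x /cov [i iD fi]; by exists i.
Qed.

Lemma bigcap_seqP (T : Type) (P : set T -> Prop) (s : seq (set T)) :
  P setT -> (forall A B, P A -> P B -> P (A `&` B)) -> (forall A, A \in s -> P A) ->
  P (\bigcap_(A in [set` s]) A).
Proof.
move=> PT PI; elim: s => [|a s IH] Ps.
  suff -> : \bigcap_(A in [set` [::]]) A = @setT T by [].
  by apply/seteqP; split=> // x _ A; rewrite /= in_nil.
have -> : \bigcap_(A in [set` a :: s]) A = a `&` \bigcap_(A in [set` s]) A.
  apply/seteqP; split=> x.
    move=> h; split; first by apply: h; rewrite /= inE eqxx.
    by move=> A As; apply: h; rewrite /= inE As orbT.
  move=> [ax h] A; rewrite /= inE => /orP[/eqP->//|As]; exact: h.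
apply: PI; first by apply: Ps; rewrite inE eqxx.
by apply: IH => A As; apply: Ps; rewrite inE As orbT.
Qed.

Section ZD.
Variable G : topGroupType.
Hypotheses (hT : hausdorff_space G) (cT : compact [set: G]).
Variable x : G.
Let Z := [set z : G | forall C, clopen C -> C x -> C z].

Let KL (A1 A2 : set G) : closed A1 -> closed A2 -> A1 `&` A2 = set0 ->
  Z `<=` A1 `|` A2 -> A1 x -> Z `&` A2 = set0.
Proof.
move=> cA1 cA2 A12 ZA Ax.
have nrm := compact_normal hT cT.
have hW : set_nbhs A1 (~` A2).
  apply/set_nbhsP; exists (~` A2); split => //; first exact: closed_openC.
  by move=> z A1z A2z; have : (A1 `&` A2) z by []; rewrite A12.
have [V /set_nbhsP [U [oU A1U UV]] clV] := nrm A1 cA1 _ hW.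
pose V' := ~` closure V.
have oV' : open V' by apply: closed_openC; exact: closed_closure.
have A2V' : A2 `<=` V' by move=> a A2a /clV.
have UV' : forall z, U z -> V' z -> False.
  by move=> z /UV /subset_closure.
pose K := ~` (U `|` V').
have cK : compact K.
  apply: (subclosed_compact _ cT) => //; apply: open_closedC; exact: openU.
have [s [sD scov]] : exists s : seq (set G),
    (forall C, C \in s -> clopen C /\ C x) /\ K `<=` \bigcup_(C in [set` s]) ~` C.
  apply: (cover_seq (D := [set C | clopen C /\ C x])) => //.
    by move=> C [[_ cC] _]; exact: closed_openC.
  move=> k Kk; apply: contrapT => nk.
  have Zk : Z k.
    move=> C cC Cx; apply: contrapT => nCk; apply: nk; by exists C.
  by apply: Kk; have [] := ZA k Zk; [left; exact: A1U| right; exact: A2V'].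
pose Cs := \bigcap_(C in [set` s]) C.
have clCs : clopen Cs.
  apply: bigcap_seqP; first exact: clopenT.
    by move=> ? ?; exact: clopenI.
  by move=> C /sD [].
have Csx : Cs x by move=> C /sD [].
have CsUV : Cs `<=` U `|` V'.
  move=> z Csz; apply: contrapT => nz.
  by have [C Cs' nC] := scov z nz; apply: nC; exact: Csz.
pose W := Cs `&` U.
have clW : clopen W.
  split; first by apply: openI => //; case: clCs.
  have -> : W = Cs `&` ~` V'.
    apply/seteqP; split=> z [Csz hz]; split => //.
      by move=> V'z; exact: UV' hz V'z.
    by have [//|V'z] := CsUV z Csz.
  by apply: closedI; [case: clCs | exact: open_closedC].
have Wx : W x by split => //; exact: A1U.
apply/seteqP; split => // z [Zz A2z].
have [_ Uz] := Zz W clW Wx.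
exact: UV' Uz (A2V' z A2z).
Qed.

Let clZ : closed Z.
Proof.
have -> : Z = \bigcap_(C in [set C | clopen C /\ C x]) C.
  apply/seteqP; split=> z hz.
    by move=> C [cC Cx]; exact: hz.
  by move=> C cC Cx; apply: hz.
by apply: closed_bigI => C [[]].
Qed.

Let Zx : Z x. Proof. by move=> C _. Qed.

Let conZ : connected Z.
Proof.
move=> B B0 [O oO BO] [F cF BF].
have cO' : closed (~` O) by exact: open_closedC.
case: (pselect (B x)) => Bx.
  have h : Z `&` (Z `&` ~` O) = set0.
    apply: (KL (A1 := Z `&` F)).
    - exact: closedI.
    - exact: closedI.
    - apply/seteqP; split=> // z [[Zz Fz] [_ nOz]]; apply: nOz.
      have Bz : B z by rewrite BF.
      by move: Bz; rewrite BO => -[].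
    - move=> z Zz; case: (pselect (O z)) => Oz; [left|right] => //.
      have Bz : B z by rewrite BO.
      by move: Bz; rewrite BF => -[].
    - by move: Bx; rewrite BF.
  rewrite BO; apply/seteqP; split=> z; first by case.
  move=> Zz; split => //; apply: contrapT => nOz.
  by have : (Z `&` (Z `&` ~` O)) z by []; rewrite h.
have nOx : ~ O x by move=> Ox; apply: Bx; rewrite BO.
have h : Z `&` (Z `&` F) = set0.
  apply: (KL (A1 := Z `&` ~` O)).
  - exact: closedI.
  - exact: closedI.
  - apply/seteqP; split=> // z [[Zz nOz] [_ Fz]]; apply: nOz.
    have Bz : B z by rewrite BF.
    by move: Bz; rewrite BO => -[].
  - move=> z Zz; case: (pselect (O z)) => Oz; [right|left] => //.
    have Bz : B z by rewrite BO.
    by move: Bz; rewrite BF => -[].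
  - by [].
case: B0 => b Bb; move: (Bb); rewrite BF => -[Zb Fb].
by have : (Z `&` (Z `&` F)) b by []; rewrite h.
Qed.

Lemma quasi_sep : totally_disconnected [set: G] ->
  forall y, x != y -> exists C, [/\ clopen C, C x & ~ C y].
Proof.
move=> td y xy; apply: contrapT => nC.
have Zy : Z y.
  move=> C cC Cx; apply: contrapT => nCy; apply: nC; by exists C.
have : connected_component [set: G] x y.
  by apply: (connected_component_max Zx) => //.
rewrite td // => /= yx; by rewrite yx eqxx in xy.
Qed.
End ZD.

Lemma bigcapI_seqP (T : Type) (I : eqType) (P : set T -> Prop) (F : I -> set T) (s : seq I) :
  P setT -> (forall A B, P A -> P B -> P (A `&` B)) -> (forall i, i \in s -> P (F i)) ->
  P (\bigcap_(i in [set` s]) F i).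
Proof.
move=> PT PI; elim: s => [|a s IH] Ps.
  suff -> : \bigcap_(i in [set` [::]]) F i = @setT T by [].
  by apply/seteqP; split=> // x _ A; rewrite /= in_nil.
have -> : \bigcap_(i in [set` a :: s]) F i = F a `&` \bigcap_(i in [set` s]) F i.
  apply/seteqP; split=> x.
    move=> h; split; first by apply: h; rewrite /= inE eqxx.
    by move=> i iS; apply: h; rewrite /= inE iS orbT.
  by move=> [ax h] i; rewrite /= inE => /orP[/eqP->//|iS]; exact: h.
apply: PI; first by apply: Ps; rewrite inE eqxx.
by apply: IH => i iS; apply: Ps; rewrite inE iS orbT.
Qed.

Section OpenNormal.
Variable G : topGroupType.
Hypothesis tg : topological_group G.
Hypothesis cT : compact [set: G].

Lemma tube (K : set G) (f : G -> G -> G) (U : set G) :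
  compact K -> open U ->
  (forall k, K k -> forall W, nbhs (f k 1) W ->
     exists A, exists B, [/\ nbhs k A, nbhs 1 B & forall a b, A a -> B b -> W (f a b)]) ->
  (forall k, K k -> U (f k 1)) ->
  exists2 B, nbhs 1 B & forall k b, K k -> B b -> U (f k b).
Proof.
move=> cK oU fc Uk.
have ch : forall k, exists AB : set G * set G, K k ->
    [/\ nbhs k AB.1, nbhs 1 AB.2 & forall a b, AB.1 a -> AB.2 b -> U (f a b)].
  move=> k; case: (pselect (K k)) => Kk; last by exists (setT, setT).
  have [A [B [hA hB hAB]]] := fc k Kk U (proj1 (openP U) oU _ (Uk k Kk)).
  by exists (A, B).
pose AB k := projT1 (cid (ch k)).
have hAB k : K k -> _ := projT2 (cid (ch k)).
have [s [sK scov]] : exists s : seq G, (forall i, i \in s -> K i) /\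
    K `<=` \bigcup_(i in [set` s]) (AB i).1°.
  apply: cover_seq => //; first by move=> i _; exact: open_interior.
  move=> k Kk; exists k => //; by have [h _ _] := hAB k Kk.
exists (\bigcap_(i in [set` s]) (AB i).2).
  apply: bigcapI_seqP; [exact: filterT | by move=> ? ?; exact: filterI |].
  by move=> i iS; have [] := hAB i (sK i iS).
move=> k b Kk Bb; have [i iS hi] := scov k Kk.
have [_ _ h] := hAB i (sK i iS); apply: h; last exact: Bb.
exact: interior_subset.
Qed.

Lemma subgroup_open (S V : set G) : is_subgroup S -> nbhs 1 V -> V `<=` S -> open S.
Proof.
move=> [S1 SM SV] hV VS; apply/openP => h Sh.
have : nbhs (h^-1 * h) V by rewrite mulVg.
move=> /(lmul_nbhs tg) hh; apply: filterS hh => y Vy.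
by have := SM _ _ Sh (VS _ Vy); rewrite mulgA mulgV mul1g.
Qed.

Lemma conj_joint (k g : G) W : nbhs (k^-1 * g * k) W ->
  exists A, exists B, [/\ nbhs k A, nbhs g B & forall a b, A a -> B b -> W (a^-1 * b * a)].
Proof.
move=> /(mul_nbhs tg) [A1 [A2 [h1 h2 s12]]].
have [A3 [B [h3 hB s3]]] := mul_nbhs tg h1.
exists (A2 `&` [set a | A3 a^-1]), B; split => //.
  by apply: filterI => //; apply: inv_nbhs.
by move=> a b [A2a A3a] Bb; apply: s12 => //; apply: s3.
Qed.

Lemma open_normal_sub (C : set G) : clopen C -> C 1 ->
  exists N, [/\ is_subgroup N, open N, (forall x n, N n -> N (x^-1 * n * x)) & N `<=` C].
Proof.
move=> [oC cC] C1.
have cC' : compact C by apply: (subclosed_compact cC cT).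
have [V hV VC] : exists2 V, nbhs 1 V & forall k b, C k -> V b -> C (k * b).
  apply: (tube (f := fun c v => c * v)) => //.
  - by move=> k _ W hW; exact: mul_nbhs.
  - by move=> k Ck; rewrite /= mulg1.
pose H := [set g | forall c, C c -> C (c * g) /\ C (c * g^-1)].
have Hsub : is_subgroup H.
  split.
  - by move=> c Cc; rewrite invg1 mulg1.
  - move=> x y Hx Hy c Cc; have [Cx _] := Hx c Cc; split.
      by rewrite mulgA; exact: (Hy _ Cx).1.
    by rewrite invgM mulgA; apply: (Hx _ (Hy c Cc).2).2.
  - by move=> x Hx c Cc; have [h1 h2] := Hx c Cc; rewrite invgK.
have HC : H `<=` C by move=> g Hg; have := (Hg 1 C1).1; rewrite mul1g.
pose V' := V `&` [set v | V v^-1].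
have hV' : nbhs 1 V'.
  apply: filterI => //; apply: inv_nbhs => //; by rewrite invg1.
have V'H : V' `<=` H by move=> v [Vv Vv'] c Cc; split; apply: VC.
have oH : open H := subgroup_open Hsub hV' V'H.
pose N := [set g | forall x, H (x^-1 * g * x)].
have cj1 : forall x : G, x^-1 * 1 * x = 1 by move=> x; rewrite mulg1 mulVg.
have cjM : forall x a b : G, x^-1 * (a * b) * x = (x^-1 * a * x) * (x^-1 * b * x).
  by move=> x a b; rewrite !mulgA mulgK.
have cjV : forall x a : G, x^-1 * a^-1 * x = (x^-1 * a * x)^-1.
  by move=> x a; rewrite !invgM invgK mulgA.
have cjJ : forall x y a : G, y^-1 * (x^-1 * a * x) * y = (x * y)^-1 * a * (x * y).
  by move=> x y a; rewrite invgM !mulgA.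
exists N; split.
- split.
  + by move=> x; rewrite cj1; case: Hsub.
  + by move=> a b Na Nb x; rewrite cjM; case: Hsub => _ HM _; apply: HM.
  + by move=> a Na x; rewrite cjV; case: Hsub => _ _ HV; apply: HV.
- have [B hB BN] : exists2 B, nbhs 1 B & forall k b, setT k -> B b -> H (k^-1 * b * k).
    apply: (tube (f := fun x g => x^-1 * g * x)) => //.
    + by move=> k _ W hW; exact: conj_joint.
    + by move=> k _; rewrite /= cj1; case: Hsub.
  apply: (subgroup_open (S := N) _ hB); last by move=> b Bb x; exact: BN.
  split.
  + by move=> x; rewrite cj1; case: Hsub.
  + by move=> a b Na Nb x; rewrite cjM; case: Hsub => _ HM _; apply: HM.
  + by move=> a Na x; rewrite cjV; case: Hsub => _ _ HV; apply: HV.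
- by move=> x n Nn y; rewrite cjJ.
- by move=> g Ng; apply: HC; have := Ng 1; rewrite invg1 mul1g mulg1.
Qed.
End OpenNormal.

Section Quot.
Variables (G : topGroupType) (Q N : set G) (n : nat) (s : seq G).
Hypotheses (sQ : is_subgroup Q) (sN : is_subgroup N) (NQ : N `<=` Q)
  (nN : normal_in N Q).
Hypotheses (sP : forall i, (i < n.+1)%N -> Q (nth 1 s i))
  (sC : forall x, Q x -> exists2 i, (i < n.+1)%N & N ((nth 1 s i)^-1 * x))
  (sD : forall i j, (i < n.+1)%N -> (j < n.+1)%N ->
                   N ((nth 1 s i)^-1 * nth 1 s j) -> i = j).

Let Q1 : Q 1. Proof. by case: sQ. Qed.
Let QM : forall x y, Q x -> Q y -> Q (x * y). Proof. by case: sQ. Qed.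
Let QV : forall x, Q x -> Q x^-1. Proof. by case: sQ. Qed.
Let N1 : N 1. Proof. by case: sN. Qed.
Let NM : forall x y, N x -> N y -> N (x * y). Proof. by case: sN. Qed.
Let NV : forall x, N x -> N x^-1. Proof. by case: sN. Qed.

Let sn (i : 'I_n.+1) := nth 1 s i.
Let sQi (i : 'I_n.+1) : Q (sn i) := sP (ltn_ord i).

Definition idx (z : G) : 'I_n.+1 :=
  match [pick i : 'I_n.+1 | `[< N ((nth 1 s i)^-1 * z) >]] with
  | Some i => i | None => ord0 end.

Lemma idxP z : Q z -> N ((sn (idx z))^-1 * z).
Proof.
move=> Qz; rewrite /idx; case: pickP => [i /asboolP //|].
have [i ilt Ni] := sC Qz => /(_ (Ordinal ilt)) /=.
by move/asboolP: Ni => ->.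
Qed.

Lemma sD' (i j : 'I_n.+1) : N ((sn i)^-1 * sn j) -> i = j.
Proof. by move=> h; apply: val_inj; exact: (sD (ltn_ord i) (ltn_ord j) h). Qed.

Lemma idx_uniq z i : Q z -> N ((sn i)^-1 * z) -> idx z = i.
Proof.
move=> Qz Ni; apply: sD'; have h := NM (idxP Qz) (NV Ni).
by move: h; rewrite invgM invgK mulgA mulgK.
Qed.

Definition sfun (x : G) (i : 'I_n.+1) := idx (x^-1 * sn i).

Lemma sfun_inj x : Q x -> injective (sfun x).
Proof.
move=> Qx i j eij.
have Qi : Q (x^-1 * sn i) by apply: QM; [exact: QV | exact: sQi].
have Qj : Q (x^-1 * sn j) by apply: QM; [exact: QV | exact: sQi].
have hi := idxP Qi; have hj := idxP Qj.
rewrite /sfun in eij; rewrite eij in hi.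
apply: sD'; have := NM (NV hi) hj.
by rewrite invgM invgK !mulgA mulgK invgM invgK mulgK.
Qed.

Definition sigma (x : G) : {perm 'I_n.+1} :=
  match pselect (Q x) with left Qx => perm (sfun_inj Qx) | right _ => 1 end.

Lemma sigmaE x i : Q x -> sigma x i = idx (x^-1 * sn i).
Proof. by move=> Qx; rewrite /sigma; case: pselect => // Qx'; rewrite permE. Qed.

Lemma sigmaM x y : Q x -> Q y -> sigma (x * y) = sigma x * sigma y.
Proof.
move=> Qx Qy; apply/permP => i; rewrite permM !sigmaE //; last exact: QM.
set j := idx (x^-1 * sn i).
have Qi : Q (x^-1 * sn i) by apply: QM; [exact: QV | exact: sQi].
have Qj : Q (y^-1 * sn j) by apply: QM; [exact: QV | exact: sQi].
have hj := idxP Qi; have hl := idxP Qj.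
apply: idx_uniq; first by apply: QM; [apply: QV; exact: QM | exact: sQi].
have := NM hl hj; by rewrite invgM !mulgA mulgK.
Qed.

Let i0 := idx 1.
Let Ni0 : N (sn i0).
Proof. by have := idxP Q1; rewrite mulg1 => /NV; rewrite invgK. Qed.

Lemma sigma_ker x : Q x -> (sigma x = 1 <-> N x).
Proof.
move=> Qx; split => [h|Nx].
  have := congr1 (fun g : {perm 'I_n.+1} => g i0) h; rewrite /= sigmaE // perm1 => e.
  have Qi : Q (x^-1 * sn i0) by apply: QM; [exact: QV | exact: sQi].
  have := idxP Qi; rewrite e => H.
  have := nN (QV (sQi i0)) H; rewrite invgK !mulgA mulgV mul1g mulgK => /NV.
  by rewrite invgK.
apply/permP => i; rewrite sigmaE // perm1; apply: idx_uniq.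
  by apply: QM; [exact: QV | exact: sQi].
by rewrite mulgA; apply: nN (sQi i) (NV Nx).
Qed.

Definition Iset : {set {perm 'I_n.+1}} := [set sigma (sn j)^-1 | j : 'I_n.+1].

Lemma sigma_in x : Q x -> sigma x \in Iset.
Proof.
move=> Qx; set j := sigma x i0.
have Qi : Q (x^-1 * sn i0) by apply: QM; [exact: QV | exact: sQi].
have h1 := idxP Qi; rewrite -sigmaE // -/j in h1.
have h2 : N ((sn j)^-1 * x^-1) by have := NM h1 (NV Ni0); rewrite -mulgA mulgK.
have h3 : N (x^-1 * (sn j)^-1).
  by have := nN Qx h2; rewrite -mulgA mulgVK.
have Qy : Q (x^-1 * (sn j)^-1) by apply: QM; apply: QV => //; exact: sQi.
have e : sigma (sn j)^-1 = sigma x.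
  have -> : (sn j)^-1 = x * (x^-1 * (sn j)^-1) by rewrite mulgA mulgV mul1g.
  by rewrite sigmaM // (proj2 (sigma_ker Qy) h3) mulg1.
by apply/imsetP; exists j => //; rewrite e.
Qed.

Lemma Iset_sigma g : g \in Iset -> exists2 x, Q x & g = sigma x.
Proof.
by move=> /imsetP [j _ ->]; exists (sn j)^-1 => //; apply: QV; exact: sQi.
Qed.

Lemma Iset_group : group_set Iset.
Proof.
apply/group_setP; split.
  by rewrite -(proj2 (sigma_ker Q1) N1); apply: sigma_in.
move=> g h /Iset_sigma [a Qa ->] /Iset_sigma [b Qb ->].
by rewrite -sigmaM //; apply: sigma_in; exact: QM.
Qed.

Definition Igroup := Group Iset_group.

Lemma card_Iset : #|Igroup| = n.+1.
Proof.
rewrite /= /Iset card_imset ?card_ord // => j k e.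
have := congr1 (fun g : {perm 'I_n.+1} => g i0) e.
have ev : forall l, sigma (sn l)^-1 i0 = l.
  move=> l; rewrite sigmaE; last by apply: QV; exact: sQi.
  apply: idx_uniq; first by apply: QM; [rewrite invgK; exact: sQi | exact: sQi].
  by rewrite invgK mulgA mulVg mul1g.
by rewrite /= !ev.
Qed.

Lemma QX x m : Q x -> Q (x ^+ m).
Proof. by move=> Qx; elim: m => [|m IH]; rewrite ?expg0 ?expgS //; apply: QM. Qed.

Lemma sigmaX x m : Q x -> sigma (x ^+ m) = sigma x ^+ m.
Proof.
move=> Qx; elim: m => [|m IH].
  by rewrite !expg0; apply/(sigma_ker Q1).
by rewrite !expgS sigmaM ?IH //; exact: QX.
Qed.

Lemma quot_exp x : Q x -> N (x ^+ n.+1).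
Proof.
move=> Qx; apply/(sigma_ker (QX n.+1 Qx)); rewrite sigmaX //.
have := @expg_cardG _ Igroup _ (sigma_in Qx).
by rewrite card_Iset.
Qed.


Lemma quot_pgroup p : prime p ->
  (forall x, Q x -> forall q k, prime q -> q != p -> exists2 y, Q y & y ^+ (q ^ k)%N = x) ->
  n.+1 = (p ^ logn p n.+1)%N.
Proof.
move=> pp roots.
have pn : p.-nat n.+1.
  apply/pnatP => // q qp qdvd; rewrite inE /=.
  case: (eqVneq q p) => // qnp; exfalso.
  rewrite -card_Iset in qdvd.
  have [g gI og] := Cauchy qp qdvd.
  have [x Qx gx] := Iset_sigma gI.
  set m := #|Igroup| in qdvd og.
  have [y Qy yx] := roots x Qx q m qp qnp.
  have hy : sigma y \in Igroup := sigma_in Qy.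
  have m0 : (0 < m)%N by exact: cardG_gt0.
  have gm : g ^+ (m`_(negn q)) = 1.
    rewrite gx -yx sigmaX // -expgnA.
    apply/eqP; rewrite -order_dvdn; apply: dvdn_trans (order_dvdG hy) _.
    apply: (@dvdn_trans (m`_q * m`_(negn q))); first by rewrite partnC.
    apply: dvdn_mul => //; rewrite p_part; apply: dvdn_exp2l.
    have h1 : (q ^ logn q m <= m)%N.
      by rewrite -p_part; apply: dvdn_leq m0 (dvdn_part _ _).
    have h2 := ltn_expl (logn q m) (prime_gt1 qp).
    by apply: ltnW; apply: leq_trans h2 h1.
  have hq : q %| m`_(negn q).
    have : #[g] %| m`_(negn q) by rewrite order_dvdn gm.
    by rewrite og.
  have := pnatP _ (part_gt0 (negn q) m) (part_pnat (negn q) m) q qp hq.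
  by rewrite inE /= inE eqxx.
by rewrite -p_part part_pnat_id.
Qed.

End Quot.

Lemma profinite_base (G : topGroupType) : profinite G ->
  forall W : set G, nbhs 1 W ->
  exists N, [/\ is_subgroup N, open N, (forall x n, N n -> N (x^-1 * n * x)) & N `<=` W].
Proof.
move=> [tg hT cT td] W hW.
have zd : zero_dimensional G by move=> x y xy; exact: quasi_sep.
have [D [D1 cD] DW] := zero_dimensional_cvg hT zd cT hW.
have [N [sN oN nN ND]] := open_normal_sub tg cT cD D1.
by exists N; split => // z /ND /DW.
Qed.

Lemma expg_cont (G : topGroupType) : topological_group G ->
  forall m, continuous (fun z : G => z ^+ m).
Proof.
move=> tg; elim=> [|m IH] x.
  by apply: cst_continuous.
move=> W /=; rewrite expgS => /(mul_nbhs tg) [A [B [hA hB sAB]]].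
have := IH x B hB => hB'.
apply: filterS (filterI hA hB') => z [Az Bz]; rewrite /= expgS; exact: sAB.
Qed.

Lemma dedupe (G : topGroupType) (Q N : set G) : is_subgroup N ->
  forall t : seq G, (forall x, x \in t -> Q x) ->
  exists s : seq G, [/\ forall i, (i < size s)%N -> Q (nth 1 s i),
    forall x, x \in t -> exists2 i, (i < size s)%N & N ((nth 1 s i)^-1 * x)
  & forall i j, (i < size s)%N -> (j < size s)%N ->
      N ((nth 1 s i)^-1 * nth 1 s j) -> i = j].
Proof.
move=> [N1 NM NV]; elim=> [|a t IH] tQ.
  by exists [::]; split => // x; rewrite in_nil.
have [s [sQ sC sD]] : exists s : seq G, [/\ forall i, (i < size s)%N -> Q (nth 1 s i),
    forall x, x \in t -> exists2 i, (i < size s)%N & N ((nth 1 s i)^-1 * x)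
  & forall i j, (i < size s)%N -> (j < size s)%N ->
      N ((nth 1 s i)^-1 * nth 1 s j) -> i = j].
  by apply: IH => x xt; apply: tQ; rewrite inE xt orbT.
have Qa : Q a by apply: tQ; rewrite inE eqxx.
case: (pselect (exists2 i, (i < size s)%N & N ((nth 1 s i)^-1 * a))) => [ha|na].
  exists s; split => // x; rewrite inE => /orP[/eqP->//|]; exact: sC.
exists (a :: s); split.
- by case=> [|i] //= /sQ.
- move=> x; rewrite inE => /orP[/eqP->|/sC [i ilt Ni]].
    by exists 0%N => //=; rewrite mulVg.
  by exists i.+1.
- case=> [|i] [|j] //= ilt jlt.
  + move=> /NV; rewrite invgM invgK => h; exfalso; apply: na; by exists j.
  + move=> h; exfalso; apply: na; by exists i.
  + by move=> /(sD i j ilt jlt) ->.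
Qed.

Lemma cosets_fin (G : topGroupType) : topological_group G -> compact [set: G] ->
  forall Q N : set G, closed Q -> is_subgroup Q -> is_subgroup N -> N `<=` Q ->
  rel_open Q N ->
  exists s : seq G, [/\ forall i, (i < size s)%N -> Q (nth 1 s i),
    forall x, Q x -> exists2 i, (i < size s)%N & N ((nth 1 s i)^-1 * x)
  & forall i j, (i < size s)%N -> (j < size s)%N ->
      N ((nth 1 s i)^-1 * nth 1 s j) -> i = j].
Proof.
move=> tg cT Q N cQ [Q1 QM QV] sN NQ [U [oU NQU]].
have cQ' : compact Q by apply: (subclosed_compact cQ cT).
have U1 : U 1.
  have : N 1 by case: sN.
  by rewrite NQU => -[].
have [t [tQ tcov]] : exists t : seq G, (forall i, i \in t -> Q i) /\
    Q `<=` \bigcup_(i in [set` t]) [set y | U (i^-1 * y)].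
  apply: cover_seq => //; first by move=> i _; exact: open_lmul.
  by move=> x Qx; exists x => //=; rewrite mulVg.
have [s [sQ sC sD]] := dedupe sN tQ.
exists s; split => // z Qz.
have [i it Ui] := tcov z Qz.
have Ni : N (i^-1 * z) by rewrite NQU; split => //; apply: QM => //; apply: QV; exact: tQ.
have [j jlt Nj] := sC i it; exists j => //.
case: sN => _ NM _; have := NM _ _ Nj Ni.
by rewrite mulgA mulgK.
Qed.

Definition rootsP (p : nat) (G : topGroupType) (S : set G) :=
  is_subgroup S /\ forall x, S x -> forall q k, prime q -> q != p ->
    exists2 y, S y & y ^+ (q ^ k)%N = x.

Lemma subX (G : topGroupType) (S : set G) x m : is_subgroup S -> S x -> S (x ^+ m).
Proof.
by move=> [S1 SM _] Sx; elim: m => [|m IH]; rewrite ?expg0 ?expgS //; apply: SM.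
Qed.

Lemma proP_of_roots p (G : topGroupType) : profinite G -> prime p ->
  forall Q : set G, closed Q -> rootsP p Q -> pro_p_subgroup p Q.
Proof.
move=> [tg hT cT td] pp Q cQ [sQ rQ]; split => // N sN NQ nN rN.
have [s [sP sC sD]] := cosets_fin tg cT cQ sQ sN NQ rN.
case es: (size s) => [|n] in sP sC sD.
  by have [Q1 _ _] := sQ; have [i] := sC 1 Q1.
have e := quot_pgroup sQ sN nN sP sC sD pp rQ.
exists (logn p n.+1), s; rewrite -e; split => //.
Qed.

Lemma gid1 (T : groupType) (x w : T) : w = x * (x^-1 * (w / x) * x).
Proof. by rewrite [x^-1 * (w / x)]mulgA mulgVK mulKVg. Qed.

Lemma roots_of_proP p (G : topGroupType) : profinite G -> prime p ->
  forall Q : set G, pro_p_subgroup p Q -> rootsP p Q.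
Proof.
move=> pf pp Q [sQ cQ hQ]; have [tg hT cT td] := pf.
split => // x Qx q k qp qnp.
set m := (q ^ k)%N.
pose A := (fun z : G => z ^+ m) @` Q.
have cA : closed A.
  apply: (compact_closed hT); apply: continuous_compact.
    by apply: continuous_subspaceT => z; exact: expg_cont.
  exact: (subclosed_compact cQ cT).
apply: contrapT => nA.
have oW : open (~` A) := closed_openC cA.
have hW : nbhs 1 [set b | (~` A) (x * b)].
  apply: (lmul_nbhs tg); rewrite mulg1; exact: (proj1 (openP _) oW).
have [M [sM oM nM MW]] := profinite_base pf hW.
pose N := Q `&` M.
have [Q1 QM QV] := sQ; have [M1 MM MV] := sM.
have sN : is_subgroup N.
  split; first by split.
    by move=> a b [Qa Ma] [Qb Mb]; split; [apply: QM | apply: MM].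
  by move=> a [Qa Ma]; split; [apply: QV | apply: MV].
have NQ : N `<=` Q by move=> a [].
have nN : normal_in N Q.
  move=> y a Qy [Qa Ma]; split; last exact: nM.
  by apply: (QM) => //; apply: (QM) => //; apply: (QV).
have rN : rel_open Q N by exists M.
have [e [s [ss sP sC sD]]] := hQ N sN NQ nN rN.
case ep: (p ^ e)%N => [|n] in ss sP sC sD.
  have : (0 < p ^ e)%N by rewrite expn_gt0 prime_gt0.
  by rewrite ep.
have hx := quot_exp sQ sN nN sP sC sD Qx.
have cop : coprime n.+1 m.
  rewrite -ep /m; apply: coprimeXl; apply: coprimeXr.
  by rewrite prime_coprime // dvdn_prime2 // eq_sym.
have [u _ hu] := Bezoutl m (ltn0Sn n).
rewrite (eqP cop) in hu.
have Nw : N (x * (x ^+ u) ^+ m).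
  rewrite -expgnA -[x in x * _]expg1 -expgnDr -(divnK hu) mulnC expgnA.
  exact: subX.
pose z := (x ^+ u)^-1.
have Qz : Q z by apply: QV; exact: subX.
apply: (MW (x^-1 * (x * (x ^+ u) ^+ m)^-1 * x)).
  by apply: nM; apply: MV; case: Nw.
exists z => //.
rewrite /z expVgn invgM; exact: gid1.
Qed.

Lemma closure_roots p (G : topGroupType) : profinite G ->
  forall S : set G, rootsP p S -> rootsP p (closure S).
Proof.
move=> [tg hT cT td] S [[S1 SM SV] rS]; split.
  split; first exact: subset_closure.
    move=> x y clx cly B hB.
    have [A1 [B1 [h1 h2 s12]]] := mul_nbhs tg hB.
    have [a [Sa A1a]] := clx A1 h1; have [b [Sb B1b]] := cly B1 h2.
    by exists (a * b); split; [apply: SM | apply: s12].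
  move=> x clx B hB; have [a [Sa Ba]] := clx _ (inv_nbhs tg hB).
  by exists a^-1; split => //; apply: SV.
move=> x clx q k qp qnp.
pose A := (fun z : G => z ^+ (q ^ k)%N) @` closure S.
have cA : closed A.
  apply: (compact_closed hT); apply: continuous_compact.
    by apply: continuous_subspaceT => z; exact: expg_cont.
  by apply: (subclosed_compact _ cT) => //; exact: closed_closure.
have SA : S `<=` A.
  move=> s Ss; have [y Sy ys] := rS s Ss q k qp qnp.
  by exists y => //; exact: subset_closure.
by apply: cA; apply: (closureS SA).
Qed.

Section Morph.
Variables (G H : topGroupType) (f : G -> H).
Hypothesis fM : {morph f : x y / x * y}.

Lemma morph1 : f 1 = 1.
Proof. by apply: (@mulgI _ (f 1)); rewrite -fM !mulg1. Qed.

Lemma morphV x : f x^-1 = (f x)^-1.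
Proof. by apply: (@mulgI _ (f x)); rewrite -fM !mulgV morph1. Qed.

Lemma morphX x m : f (x ^+ m) = f x ^+ m.
Proof. by elim: m => [|m IH]; rewrite ?expg0 ?morph1 // !expgS fM IH. Qed.

Lemma morph_roots p (S : set G) : rootsP p S -> rootsP p (f @` S).
Proof.
move=> [[S1 SM SV] rS]; split.
  split; first by exists 1 => //; exact: morph1.
    by move=> _ _ [a Sa <-] [b Sb <-]; exists (a * b); [apply: SM | rewrite fM].
  by move=> _ [a Sa <-]; exists a^-1; [apply: SV | rewrite morphV].
move=> _ [a Sa <-] q k qp qnp; have [y Sy ya] := rS a Sa q k qp qnp.
by exists (f y); [exists y | rewrite -morphX ya].
Qed.
End Morph.

Unset Implicit Arguments.

Theorem mainTheorem14 (p : nat) (G H : topGroupType) (phi : G -> H) :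
  prime p -> profinite G -> profinite H ->
  bijective phi -> {morph phi : x y / x * y} ->
  forall P : set G, p_Sylow p P -> p_Sylow p (phi @` P).
Proof.
move=> pp pfG pfH [psi phiK psiK] phiM P [proP Pmax].
have psiM : {morph psi : x y / x * y}.
  by move=> a b; rewrite -{1}(psiK a) -{1}(psiK b) -phiM phiK.
have maxR : forall S : set G, rootsP p S -> P `<=` S -> S `<=` P.
  move=> S RS PS.
  have RC := closure_roots pfG RS.
  have pC := proP_of_roots pfG pp (@closed_closure _ S) RC.
  have e := Pmax _ pC (subset_trans PS (@subset_closure _ S)).
  by rewrite -e; exact: subset_closure.
have RP := roots_of_proP pfG pp proP.
have RphiP := morph_roots phiM RP.
have back : forall T : set H, rootsP p T -> phi @` P `<=` T -> T `<=` phi @` P.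
  move=> T RT PT t Tt.
  have RpsiT := morph_roots psiM RT.
  have : P `<=` psi @` T.
    by move=> x Px; exists (phi x); [apply: PT; exists x | exact: phiK].
  move=> /(maxR _ RpsiT) sub.
  by exists (psi t); [apply: sub; exists t | exact: psiK].
have clP : closed (phi @` P).
  apply: back; first exact: closure_roots.
  exact: subset_closure.
have proPhi : pro_p_subgroup p (phi @` P) := proP_of_roots pfH pp clP RphiP.
split => // Q pQ PQ.
apply/seteqP; split => //.
apply: back => //; exact: roots_of_proP.
Qed.

Print Assumptions mainTheorem14.
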